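(* Let $f:\Omega^\infty\to\Omega$ be a finitary Boolean function. Then almost surely the pivotal set $\mathcal{P}(f)(\omega)$ is finite. If in addition $f$ is $1$-knowable, then the total influence is finite: $I(f)=\sum_{k\ge1} I_k(f)<\infty$.
   Context: Let $\Omega=\{-1,1\}$ and $\Omega^\infty=\{-1,1\}^{\mathbb N}$ with the uniform product probability measure; $\omega=(\omega_1,\omega_2,\dots)$ denotes a uniformly random element. A Boolean function is a (measurable) map $f:\Omega^\infty\to\Omega$. For $k\in\mathbb N$, $\omega^{(k)}$ denotes $\omega$ with bit $k$ flipped. The pivotal set is $\mathcal{P}(f)(\omega)=\{i\in\mathbb N: f(\omega^{(i)})\neq f(\omega)\}$; the influence of bit $k$ is $I_k(f)=\mathbb P(k\in\mathcal P(f)(\omega))$ and the total influence is $I(f)=\sum_k I_k(f)$. A set $W\subseteq\mathbb N$ is a witness set for $f$ at $\omega$ if there is an event $A$ with $\mathbb P(A)=1$ such that for all $\tilde\omega\in A$: if $\tilde\omega_i=\omega_i$ for all $i\in W$ then $f(\tilde\omega)=f(\omega)$. $f$ is finitary if almost surely there exists a finite witness set; then $W=W(f)(\omega)$ denotes the least finite witness set in the order: smaller maximum first, then smaller cardinality, then lexicographic. $f$ is $p$-knowable ($p>0$) if it is finitary and $\mathbb E[(\max W)^p]<\infty$. *)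

(* Defs.v *)
(* We build, from scratch, the outer measure
   of the uniform product (coin-tossing) measure on {-1,1}^N via countable
   covers by cylinder sets; "almost surely" means the exceptional set has
   outer measure 0, and probabilities of events are their outer measures
   (which coincide with the measure on measurable sets). *)
From Stdlib Require Import Reals Lra Lia List Classical ClassicalEpsilon.
Open Scope R_scope.

(* Omega^infty : bit i of the paper (i >= 1) is  w (i-1);  true = +1, false = -1 *)
Definition Omg := nat -> bool.

Definition BoolFun := Omg -> bool.

Definition event := Omg -> Prop.

Definition cyl (n : nat) (s : Omg) : event := fun w => forall i, (i < n)%nat -> w i = s i.

Definition covers (A : event) (ns : nat -> nat) (ss : nat -> Omg) : Prop :=
  forall w, A w -> exists k, cyl (ns k) (ss k) w.

Definition cover_cost (A : event) (c : R) : Prop :=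
  exists ns ss, covers A ns ss /\
    Un_cv (fun N => sum_f_R0 (fun k => (/2) ^ (ns k)) N) c.

Definition is_outer (A : event) (r : R) : Prop :=
  (forall c, cover_cost A c -> r <= c) /\
  (forall r', (forall c, cover_cost A c -> r' <= c) -> r' <= r).

Definition Pr (A : event) : R := epsilon (inhabits 0) (is_outer A).

Definition null (A : event) : Prop := Pr A = 0.

Definition as_ (P : event) : Prop := null (fun w => ~ P w).

Definition measurable (A : event) : Prop :=
  forall E, Pr E = Pr (fun w => E w /\ A w) + Pr (fun w => E w /\ ~ A w).

Definition measurable_fun (f : BoolFun) : Prop := measurable (fun w => f w = true).

Definition flip (k : nat) (w : Omg) : Omg :=
  fun i => if Nat.eqb i k then negb (w i) else w i.

Definition pivotal (f : BoolFun) (w : Omg) (i : nat) : Prop := f (flip i w) <> f w.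

Definition finite_set (S : nat -> Prop) : Prop :=
  exists l : list nat, forall i, S i -> In i l.

Definition influence (f : BoolFun) (k : nat) : R := Pr (fun w => pivotal f w k).

Definition total_influence_finite (f : BoolFun) : Prop :=
  exists M : R, forall N, sum_f_R0 (influence f) N <= M.

Definition witness (f : BoolFun) (w : Omg) (W : nat -> Prop) : Prop :=
  exists A : event, null (fun v => ~ A v) /\
    forall v, A v -> (forall i, W i -> v i = w i) -> f v = f w.

Definition has_finite_witness (f : BoolFun) (w : Omg) : Prop :=
  exists l : list nat, witness f w (fun i => In i l).

Definition finitary (f : BoolFun) : Prop := as_ (has_finite_witness f).

(* m bounds a finite witness set: there is a finite witness set all of whose
   (0-based) indices are < m, i.e. whose paper-indexed maximum is <= m *)
Definition witness_below (f : BoolFun) (w : Omg) (m : nat) : Prop :=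
  exists l : list nat, witness f w (fun i => In i l) /\ forall i, In i l -> (i < m)%nat.

(* max W(f)(w) in paper indexing (max of the empty set := 0): since the order
   defining W(f)(w) compares maxima first, this is the least possible maximum
   of a finite witness set. *)
Definition maxW (f : BoolFun) (w : Omg) : nat :=
  epsilon (inhabits 0%nat)
    (fun m => witness_below f w m /\ forall m', (m' < m)%nat -> ~ witness_below f w m').

(* E[(max W)^p] < infinity, for the nat-valued variable max W (the n = 0 term
   contributes 0 and is omitted) *)
Definition knowable (p : R) (f : BoolFun) : Prop :=
  finitary f /\
  exists M : R, forall N,
    sum_f_R0 (fun n => Rpower (INR (S n)) p * Pr (fun w => maxW f w = S n)) N <= M.

(* Main.v *)
Require Import Defs.
From Stdlib Require Import Reals Lra Lia List Classical ClassicalEpsilon FunctionalExtensionality Cantor Wf_nat.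
Open Scope R_scope.

Lemma le_eps (x y : R) : (forall eps, eps > 0 -> x <= y + eps) -> x <= y.
Proof.
  intros H. destruct (Rle_or_lt x y) as [h|h]; auto.
  specialize (H ((x - y)/2)). lra.
Qed.

Lemma pow2_pos n : 0 < (/2) ^ n.
Proof. apply pow_lt; lra. Qed.

Lemma geom_sum N : sum_f_R0 (fun k => (/2) ^ k) N = 2 - (/2) ^ N.
Proof.
  induction N; simpl. lra. rewrite IHN. lra.
Qed.

Lemma geom_sum1 N : sum_f_R0 (fun k => (/2) ^ (S k)) N <= 1.
Proof.
  assert (sum_f_R0 (fun k => (/2) ^ (S k)) N = /2 * sum_f_R0 (fun k => (/2) ^ k) N).
  { clear. induction N. simpl; lra. rewrite !tech5, IHN. simpl; lra. }
  rewrite H, geom_sum. pose proof (pow2_pos N). lra.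
Qed.

Lemma psum_growing (a : nat -> R) : (forall k, 0 <= a k) -> Un_growing (sum_f_R0 a).
Proof. intros H n. simpl. specialize (H (S n)). lra. Qed.

Lemma lim_le_bound (u : nat -> R) l c : Un_cv u l -> (forall n, u n <= c) -> l <= c.
Proof.
  intros Hc Hb. destruct (Rle_or_lt l c) as [h|h]; auto.
  destruct (Hc (l - c)) as [N HN]; [lra|].
  specialize (HN N (Nat.le_refl _)). specialize (Hb N). unfold Rdist in HN.
  apply Rabs_def2 in HN. lra.
Qed.

Lemma bounded_cover_cost A ns ss c :
  covers A ns ss -> (forall N, sum_f_R0 (fun k => (/2) ^ (ns k)) N <= c) ->
  exists l, cover_cost A l /\ l <= c.
Proof.
  intros Hcov Hb.
  assert (Hg : Un_growing (sum_f_R0 (fun k => (/2) ^ (ns k)))).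
  { apply psum_growing. intros; left; apply pow2_pos. }
  destruct (growing_cv _ Hg) as [l Hl].
  { exists c. intros x [i ->]. apply Hb. }
  exists l. split. exists ns, ss. split; auto. eapply lim_le_bound; eauto.
Qed.

Lemma cover_cost_ge0 A c : cover_cost A c -> 0 <= c.
Proof.
  intros (ns & ss & _ & Hc).
  assert (Hg : Un_growing (sum_f_R0 (fun k => (/2) ^ (ns k)))).
  { apply psum_growing. intros; left; apply pow2_pos. }
  pose proof (growing_ineq _ _ Hg Hc 0). simpl in H. pose proof (pow2_pos (ns 0%nat)). lra.
Qed.

Lemma outer_exists A : exists r, is_outer A r.
Proof.
  set (E := fun x => exists c, cover_cost A c /\ x = - c).
  assert (HB : bound E). { exists 0. intros x (c & Hc & ->). apply cover_cost_ge0 in Hc. lra. }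
  assert (HE : exists x, E x).
  { destruct (bounded_cover_cost A (fun k => k) (fun _ _ => true) 2) as (l & Hl & _).
    - intros w _. exists 0%nat. intros i Hi. lia.
    - intros N. rewrite geom_sum. pose proof (pow2_pos N). lra.
    - exists (-l), l. auto. }
  destruct (completeness E HB HE) as [m [Hu Hl]].
  exists (-m). split.
  - intros c Hc. assert (E (-c)) by (exists c; auto). apply Hu in H. lra.
  - intros r' Hr'. assert (m <= - r'). { apply Hl. intros x (c & Hc & ->). apply Hr' in Hc. lra. } lra.
Qed.

Lemma Pr_spec A : is_outer A (Pr A).
Proof.
  unfold Pr. apply epsilon_spec. apply outer_exists.
Qed.

Lemma Pr_ge0 A : 0 <= Pr A.
Proof. apply (proj2 (Pr_spec A)). apply cover_cost_ge0. Qed.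

Lemma Pr_le A ns ss c :
  covers A ns ss -> (forall N, sum_f_R0 (fun k => (/2) ^ (ns k)) N <= c) -> Pr A <= c.
Proof.
  intros H1 H2. destruct (bounded_cover_cost _ _ _ _ H1 H2) as (l & Hl & Hlc).
  apply (proj1 (Pr_spec A)) in Hl. lra.
Qed.

Lemma Pr_approx A eps : eps > 0 -> exists ns ss, covers A ns ss /\
  forall N, sum_f_R0 (fun k => (/2) ^ (ns k)) N <= Pr A + eps.
Proof.
  intros He. destruct (classic (exists c, cover_cost A c /\ c < Pr A + eps)) as [(c & (ns & ss & Hcov & Hc) & Hlt)|Hn].
  - exists ns, ss. split; auto. intros N.
    pose proof (growing_ineq _ _ (psum_growing _ (fun k => Rlt_le _ _ (pow2_pos (ns k)))) Hc N). lra.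
  - exfalso. assert (Pr A + eps <= Pr A); [|lra].
    apply (proj2 (Pr_spec A)). intros c Hc. destruct (Rle_or_lt (Pr A + eps) c); auto.
    exfalso; apply Hn; eauto.
Qed.

Lemma Pr_mono (A B : event) : (forall w, A w -> B w) -> Pr A <= Pr B.
Proof.
  intros H. apply le_eps. intros eps He. destruct (Pr_approx B eps He) as (ns & ss & Hc & Hb).
  apply (Pr_le A ns ss); auto. intros w Hw; apply Hc; auto.
Qed.

Lemma null_of A : Pr A <= 0 -> null A.
Proof. intros H. pose proof (Pr_ge0 A). unfold null. lra. Qed.

Definition xorw (d : Omg) (w : Omg) : Omg := fun j => xorb (w j) (d j).

Lemma Pr_xr (B : event) d : Pr (fun w => B (xorw d w)) <= Pr B.
Proof.
  apply le_eps. intros eps He. destruct (Pr_approx B eps He) as (ns & ss & Hc & Hb).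
  apply (Pr_le _ ns (fun k => xorw d (ss k))); auto.
  intros w Hw. destruct (Hc _ Hw) as [k Hk]. exists k. intros i Hi. specialize (Hk i Hi).
  unfold xorw in *. rewrite <- Hk. destruct (w i), (d i); reflexivity.
Qed.

Lemma flip_xr i w : flip i w = xorw (fun j => Nat.eqb j i) w.
Proof.
  apply functional_extensionality; intros j. unfold flip, xorw. destruct (Nat.eqb j i), (w j); reflexivity.
Qed.

Lemma Pr_flip (B : event) i : Pr (fun w => B (flip i w)) <= Pr B.
Proof.
  eapply Rle_trans; [|apply (Pr_xr B (fun j => Nat.eqb j i))]. apply Pr_mono.
  intros w; rewrite flip_xr; auto.
Qed.

Section LS.
Variable a : nat * nat -> R.
Hypothesis a_pos : forall x, 0 <= a x.
Fixpoint lsum (l : list (nat * nat)) : R :=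
  match l with nil => 0 | x :: l => a x + lsum l end.

Lemma lsum_app l1 l2 : lsum (l1 ++ l2) = lsum l1 + lsum l2.
Proof. induction l1; simpl; [lra|]. rewrite IHl1; lra. Qed.

Lemma lsum_ge0 l : 0 <= lsum l.
Proof. induction l; simpl. lra. pose proof (a_pos a0); lra. Qed.

Lemma lsum_incl l : NoDup l -> forall L, incl l L -> lsum l <= lsum L.
Proof.
  induction l as [|x l IH]; intros Hnd L Hinc; simpl.
  - apply lsum_ge0.
  - inversion Hnd; subst.
    destruct (in_split x L) as (L1 & L2 & ->). { apply Hinc; left; auto. }
    assert (lsum l <= lsum (L1 ++ L2)).
    { apply IH; auto. intros y Hy. assert (In y (L1 ++ x :: L2)) by (apply Hinc; right; auto).
      apply in_app_or in H. apply in_or_app. destruct H as [H|[H|H]]; auto. subst; contradiction. }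
    rewrite lsum_app in *. simpl. lra.
Qed.

Lemma lsum_seq_map (g : nat -> nat * nat) J :
  lsum (map g (seq 0 (S J))) = sum_f_R0 (fun j => a (g j)) J.
Proof.
  induction J. simpl. lra.
  rewrite seq_S, map_app, lsum_app, IHJ. rewrite tech5. simpl. lra.
Qed.

Lemma list_prod_app (l1 l2 : list nat) (l' : list nat) :
  list_prod (l1 ++ l2) l' = list_prod l1 l' ++ list_prod l2 l'.
Proof. induction l1; simpl; auto. rewrite IHl1, app_assoc. auto. Qed.

Lemma lsum_prod K1 l2 :
  lsum (list_prod (seq 0 (S K1)) l2) =
  sum_f_R0 (fun n => lsum (map (fun m => (n, m)) l2)) K1.
Proof.
  induction K1. simpl. rewrite app_nil_r; auto.
  rewrite seq_S, list_prod_app, lsum_app, IHK1, tech5. simpl.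
  rewrite app_nil_r. auto.
Qed.

Lemma lsum_box K :
  lsum (list_prod (seq 0 (S K)) (seq 0 (S K))) =
  sum_f_R0 (fun n => sum_f_R0 (fun m => a (n, m)) K) K.
Proof.
  rewrite lsum_prod. apply sum_eq. intros n _. apply (lsum_seq_map (fun m => (n, m))).
Qed.
End LS.

Lemma of_nat_bound j : (fst (of_nat j) <= j /\ snd (of_nat j) <= j)%nat.
Proof.
  pose proof (to_nat_non_decreasing (fst (of_nat j)) (snd (of_nat j))).
  rewrite <- surjective_pairing, cancel_to_of in H. lia.
Qed.

Lemma pair_sum_le (a : nat * nat -> R) J : (forall x, 0 <= a x) ->
  sum_f_R0 (fun j => a (of_nat j)) J <= sum_f_R0 (fun n => sum_f_R0 (fun m => a (n, m)) J) J.
Proof.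
  intros Ha. rewrite <- (lsum_seq_map a), <- (lsum_box a).
  apply lsum_incl; auto.
  - apply NoDup_map_inv with (f := to_nat). rewrite map_map.
    erewrite map_ext by (intros; apply cancel_to_of). rewrite map_id. apply seq_NoDup.
  - intros [n m] Hin. apply in_map_iff in Hin as (j & Hj & Hin). apply in_seq in Hin.
    pose proof (of_nat_bound j). rewrite Hj in H. simpl in H.
    apply in_prod; apply in_seq; lia.
Qed.

Lemma Pr_csub (A : nat -> event) (L : R) :
  (forall N, sum_f_R0 (fun n => Pr (A n)) N <= L) -> Pr (fun w => exists n, A n w) <= L.
Proof.
  intros HL. apply le_eps. intros eps He.
  assert (H : forall n, exists p : (nat -> nat) * (nat -> Omg), covers (A n) (fst p) (snd p) /\
     forall N, sum_f_R0 (fun k => (/2) ^ (fst p k)) N <= Pr (A n) + eps * (/2) ^ (S n)).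
  { intros n. destruct (Pr_approx (A n) (eps * (/2) ^ (S n))) as (ns & ss & H1 & H2).
    { pose proof (pow2_pos (S n)). nra. }
    exists (ns, ss); auto. }
  set (g := fun n => proj1_sig (constructive_indefinite_description _ (H n))).
  assert (Hg : forall n, covers (A n) (fst (g n)) (snd (g n)) /\
     forall N, sum_f_R0 (fun k => (/2) ^ (fst (g n) k)) N <= Pr (A n) + eps * (/2) ^ (S n)).
  { intros n. exact (proj2_sig (constructive_indefinite_description _ (H n))). }
  apply (Pr_le _ (fun j => fst (g (fst (of_nat j))) (snd (of_nat j)))
                 (fun j => snd (g (fst (of_nat j))) (snd (of_nat j)))).
  - intros w [n Hw]. destruct (proj1 (Hg n) w Hw) as [m Hm].
    exists (to_nat (n, m)). rewrite cancel_of_to. simpl. auto.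
  - intros J.
    eapply Rle_trans.
    { apply (pair_sum_le (fun p => (/2) ^ (fst (g (fst p)) (snd p))) J).
      intros; left; apply pow2_pos. }
    simpl. eapply Rle_trans.
    { apply sum_Rle. intros n _. apply (proj2 (Hg n)). }
    rewrite sum_plus. specialize (HL J).
    assert (sum_f_R0 (fun n => eps * (/2) ^ S n) J <= eps).
    { replace (sum_f_R0 (fun n => eps * (/2) ^ S n) J) with (eps * sum_f_R0 (fun n => (/2) ^ S n) J).
      pose proof (geom_sum1 J). nra.
      clear. induction J. simpl; lra. rewrite !tech5, <- IHJ. lra. }
    lra.
Qed.

Lemma sum_zero_le (u : nat -> R) N : (forall n, u n <= 0) -> sum_f_R0 u N <= 0.
Proof. intros H. induction N; simpl. apply H. specialize (H (S N)). lra. Qed.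

Lemma Pr_union_nulls (X : event) (Ns : nat -> event) :
  (forall n, null (Ns n)) -> Pr (fun w => X w \/ exists n, Ns n w) <= Pr X.
Proof.
  intros Hn.
  set (A := fun n => match n with O => X | S k => Ns k end).
  eapply Rle_trans; [apply (Pr_mono _ (fun w => exists n, A n w))|].
  - intros w [h|[n h]]. exists O; auto. exists (S n); auto.
  - apply Pr_csub. intros N. destruct N. simpl. lra.
    rewrite decomp_sum by lia. simpl.
    assert (sum_f_R0 (fun i => Pr (Ns i)) N <= 0). { apply sum_zero_le. intros; rewrite (Hn n); lra. }
    lra.
Qed.

Lemma null_le A : null A -> forall B, (forall w, B w -> A w) -> null B.
Proof. intros H B Hs. apply null_of. rewrite <- H. apply Pr_mono; auto. Qed.

Lemma cyl_null_full n s : null (cyl n s) -> null (fun _ => True).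
Proof.
  revert s. induction n; intros s H.
  - eapply null_le; eauto. intros w _ i Hi; lia.
  - apply (IHn s). apply null_of.
    set (d := fun j => Nat.eqb j n).
    eapply Rle_trans; [apply (Pr_mono _ (fun w => cyl (S n) s w \/ exists k : nat, cyl (S n) s (xorw d w)))|].
    + intros w Hw. destruct (Bool.bool_dec (w n) (s n)) as [e|e].
      * left. intros i Hi. destruct (Nat.eq_dec i n); subst; auto. apply Hw; lia.
      * right. exists O. intros i Hi. unfold xorw, d. destruct (Nat.eq_dec i n).
        -- subst. rewrite Nat.eqb_refl. destruct (w n), (s n); simpl in *; congruence.
        -- rewrite (proj2 (Nat.eqb_neq i n) n0). rewrite Bool.xorb_false_r. apply Hw; lia.
    + rewrite Pr_union_nulls. rewrite H; lra.
      intros _. apply null_of. rewrite <- H. apply Pr_xr.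
Qed.

Lemma list_bound (l : list nat) : exists K, forall i, In i l -> (i < K)%nat.
Proof.
  induction l. exists O; intros i [].
  destruct IHl as [K HK]. exists (S (Nat.max a K)). intros i [->|Hi]. lia. specialize (HK i Hi); lia.
Qed.

Section Main.
Variable f : BoolFun.
Hypothesis NC : ~ null (fun _ => True).

Lemma agree w v lw lv : witness f w (fun i => In i lw) -> witness f v (fun i => In i lv) ->
  (forall i, In i lw -> v i = w i) -> f v = f w.
Proof.
  intros (Aw & Nw & Hw) (Av & Nv & Hv) Hag.
  destruct (Bool.bool_dec (f v) (f w)) as [e|ne]; auto. exfalso.
  destruct (list_bound (lw ++ lv)) as [K HK].
  set (s := fun j => if in_dec Nat.eq_dec j lw then w j else v j).
  apply NC. apply (cyl_null_full K s). apply null_of.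
  rewrite <- Nw. eapply Rle_trans; [|apply (Pr_union_nulls _ (fun _ => fun u => ~ Av u))].
  - apply Pr_mono. intros u Hu. destruct (classic (Aw u)) as [a1|a1]; auto.
    destruct (classic (Av u)) as [a2|a2]; [|right; exists O; auto].
    exfalso. apply ne.
    assert (E1 : f u = f w). { apply Hw; auto. intros i Hi. rewrite Hu. unfold s.
      destruct (in_dec Nat.eq_dec i lw); tauto. apply HK, in_or_app; auto. }
    assert (E2 : f u = f v). { apply Hv; auto. intros i Hi. rewrite Hu. unfold s.
      destruct (in_dec Nat.eq_dec i lw); [symmetry; auto|auto]. apply HK, in_or_app; auto. }
    congruence.
  - intros _. exact Nv.
Qed.

Lemma piv_lemma w l i : witness f w (fun j => In j l) -> ~ In i l -> pivotal f w i ->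
  ~ has_finite_witness f (flip i w).
Proof.
  intros Hw Hi Hp [lv Hv]. apply Hp. eapply agree; eauto.
  intros j Hj. unfold flip. destruct (Nat.eqb_spec j i); subst; tauto.
Qed.

End Main.

Lemma least_ex (P : nat -> Prop) n : P n -> exists m, P m /\ forall m', (m' < m)%nat -> ~ P m'.
Proof.
  induction n as [n IH] using lt_wf_ind. intros Hn.
  destruct (classic (exists m', (m' < n)%nat /\ P m')) as [(m' & h1 & h2)|Hno].
  - exact (IH m' h1 h2).
  - exists n. split; auto. intros m' h1 h2. apply Hno; eauto.
Qed.

Lemma maxW_spec f w : has_finite_witness f w -> witness_below f w (maxW f w).
Proof.
  intros [l Hl]. unfold maxW.
  assert (Hex : exists m, witness_below f w m /\ forall m', (m' < m)%nat -> ~ witness_below f w m').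
  { destruct (list_bound l) as [K HK]. apply (least_ex _ K). exists l; auto. }
  exact (proj1 (epsilon_spec (inhabits 0%nat) _ Hex)).
Qed.

Lemma part1 f : ~ null (fun _ => True) -> finitary f -> as_ (fun w => finite_set (pivotal f w)).
Proof.
  intros NC Hfin. unfold finitary, as_ in *. apply null_of. rewrite <- Hfin.
  eapply Rle_trans; [|apply (Pr_union_nulls _ (fun i w => ~ has_finite_witness f (flip i w)))].
  - apply Pr_mono. intros w Hw.
    destruct (classic (has_finite_witness f w)) as [[l Hl]|h]; [|left; auto].
    right. apply NNPP. intros Hno. apply Hw. exists l. intros i Hi.
    apply NNPP. intros Hni. apply Hno. exists i. eapply piv_lemma; eauto.
  - intros i. apply null_of. rewrite <- Hfin. apply (Pr_flip (fun w => ~ has_finite_witness f w)).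
Qed.

Lemma sum_swap (g : nat -> nat -> R) K N :
  sum_f_R0 (fun k => sum_f_R0 (fun m => g k m) N) K = sum_f_R0 (fun m => sum_f_R0 (fun k => g k m) K) N.
Proof.
  induction K. simpl. auto.
  rewrite tech5, IHK, <- sum_plus. apply sum_eq. intros; rewrite tech5; auto.
Qed.

Lemma sum_mono_N (u : nat -> R) N d : (forall n, 0 <= u n) -> sum_f_R0 u N <= sum_f_R0 u (N + d).
Proof.
  intros H. induction d. rewrite Nat.add_0_r; lra.
  rewrite Nat.add_succ_r, tech5. specialize (H (S (N + d))). lra.
Qed.

Lemma count_le (p : R) m K : 0 <= p ->
  sum_f_R0 (fun k => if Nat.leb k m then p else 0) K <= INR (S m) * p.
Proof.
  intros Hp. assert (H : sum_f_R0 (fun k => if Nat.leb k m then p else 0) K <= INR (S (Nat.min K m)) * p).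
  { induction K.
    - simpl. destruct (Nat.leb 0 m) eqn:E; simpl; lra.
    - rewrite tech5. destruct (Nat.leb (S K) m) eqn:E.
      + apply Nat.leb_le in E. replace (Nat.min (S K) m) with (S (Nat.min K m)) by lia.
        rewrite (S_INR (S _)). lra.
      + apply Nat.leb_gt in E. replace (Nat.min (S K) m) with (Nat.min K m) by lia. lra. }
  eapply Rle_trans; [exact H|]. apply Rmult_le_compat_r; auto. apply le_INR. lia.
Qed.

Section P2.
Variable f : BoolFun.
Hypothesis NC : ~ null (fun _ => True).
Hypothesis Hfin : finitary f.

Definition pm m := Pr (fun w => maxW f w = S m).
Definition q k m := if Nat.leb k m then pm m else 0.

Lemma q_ge0 k m : 0 <= q k m.
Proof. unfold q. destruct (Nat.leb k m). apply Pr_ge0. lra. Qed.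

Lemma piv_sub k : Pr (fun w => pivotal f w k) <=
  Pr (fun w => exists m, (k <= m)%nat /\ maxW f w = S m).
Proof.
  unfold finitary, as_ in Hfin.
  eapply Rle_trans; [|apply (Pr_union_nulls _ (fun n w => match n with O => ~ has_finite_witness f w
                                              | S _ => ~ has_finite_witness f (flip k w) end))].
  - apply Pr_mono. intros w Hp.
    destruct (classic (has_finite_witness f w)) as [Hw|h]; [|right; exists O; auto].
    destruct (classic (has_finite_witness f (flip k w))) as [Hv|h]; [|right; exists 1%nat; auto].
    left. destruct (maxW_spec f w Hw) as (l & Hl & Hlt).
    destruct (classic (In k l)) as [Hk|Hk].
    + specialize (Hlt k Hk). exists (pred (maxW f w)). split; lia.
    + exfalso. eapply piv_lemma; eauto.
  - intros [|n]; apply null_of; rewrite <- Hfin. lra.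
    apply (Pr_flip (fun w => ~ has_finite_witness f w)).
Qed.

Lemma approx_k k eps : eps > 0 -> exists N, Pr (fun w => pivotal f w k) <= sum_f_R0 (q k) N + eps.
Proof.
  intros He. apply NNPP. intros Hno.
  assert (Pr (fun w => exists m, (k <= m)%nat /\ maxW f w = S m) <= Pr (fun w => pivotal f w k) - eps).
  { apply (Pr_csub (fun m w => (k <= m)%nat /\ maxW f w = S m)). intros N.
    eapply Rle_trans with (sum_f_R0 (q k) N).
    - apply sum_Rle. intros m _. unfold q. destruct (Nat.leb k m) eqn:E.
      + apply Pr_mono. intros w [_ h]; auto.
      + apply Nat.leb_gt in E. unfold finitary, as_ in Hfin. rewrite <- Hfin. apply Pr_mono.
        intros w [h _]. lia.
    - destruct (Rle_or_lt (sum_f_R0 (q k) N) (Pr (fun w => pivotal f w k) - eps)); auto.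
      exfalso; apply Hno; exists N; lra. }
  pose proof (piv_sub k). lra.
Qed.

Lemma approx_sum K eps : eps > 0 -> exists N,
  sum_f_R0 (fun k => Pr (fun w => pivotal f w k)) K <=
  sum_f_R0 (fun k => sum_f_R0 (q k) N) K + eps.
Proof.
  revert eps. induction K; intros eps He.
  - destruct (approx_k 0 eps He) as [N HN]. exists N. simpl. lra.
  - destruct (IHK (eps/2)) as [N1 H1]. lra.
    destruct (approx_k (S K) (eps/2)) as [N2 H2]. lra.
    exists (Nat.max N1 N2). rewrite !tech5.
    assert (sum_f_R0 (fun k => sum_f_R0 (q k) N1) K <= sum_f_R0 (fun k => sum_f_R0 (q k) (Nat.max N1 N2)) K).
    { apply sum_Rle. intros. replace (Nat.max N1 N2) with (N1 + (Nat.max N1 N2 - N1))%nat by lia.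
      apply sum_mono_N, q_ge0. }
    assert (sum_f_R0 (q (S K)) N2 <= sum_f_R0 (q (S K)) (Nat.max N1 N2)).
    { replace (Nat.max N1 N2) with (N2 + (Nat.max N1 N2 - N2))%nat by lia.
      apply sum_mono_N, q_ge0. }
    lra.
Qed.

Lemma part2 : knowable 1 f -> total_influence_finite f.
Proof.
  intros [_ [M HM]]. exists M. intros K. unfold influence. apply le_eps. intros eps He.
  destruct (approx_sum K eps He) as [N HN].
  assert (sum_f_R0 (fun k => sum_f_R0 (q k) N) K <= M); [|lra].
  rewrite (sum_swap q). eapply Rle_trans; [|apply (HM N)].
  apply sum_Rle. intros m _. rewrite Rpower_1 by (apply lt_0_INR; lia).
  apply count_le. apply Pr_ge0.
Qed.
End P2.

Theorem mainTheorem1 (f : BoolFun) :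
  measurable_fun f ->
  finitary f ->
  as_ (fun w => finite_set (pivotal f w)) /\
  (knowable 1 f -> total_influence_finite f).
Proof.
  intros _ Hfin. destruct (classic (null (fun _ => True))) as [Hn|NC].
  - assert (Z : forall A, Pr A = 0).
    { intros A. apply null_le with (B := A) in Hn; auto. }
    split.
    + apply Z.
    + intros _. exists 0. intros N. apply sum_zero_le. intros; unfold influence; rewrite Z; lra.
  - split. apply part1; auto. apply part2; auto.
Qed.
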